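(* Let $r\in\mathbb N$, $k\in\mathbb Z$ with $0\le k\le r$, and suppose Assumption (A1) holds. Then the mapping $$\hat\psi\mapsto \sum_{i=0}^{\lfloor (k-1)/2\rfloor-1}\|\hat\psi^{(i)}(-1)\|+\sum_{i=0}^{\lfloor k/2\rfloor-1}\|\hat\psi^{(i)}(1)\|+\sum_{i=\delta_{0,k}}^{r-k}\Big\|\widehat{\mathscr I}\big[\hat\psi(\hat t)(1+\hat t)^i\big]\Big\|$$ defines a norm on $P_{r-1}([-1,1],\mathbb R^d)$.
   Context: $\|\cdot\|$ is the Euclidean norm on $\mathbb R^d$; $P_s([-1,1],\mathbb R^d)$ denotes $\mathbb R^d$-valued polynomials of degree at most $s$; $\delta_{i,j}$ is the Kronecker symbol; empty sums are zero. $\widehat{\mathscr I}$ is a linear functional (reference integrator) defined on $C^{k_{\mathscr I}}([-1,1])$, acting componentwise on vector-valued functions. Assumption (A1): whenever $\hat\psi\in P_{r-\max\{1,k\}}([-1,1])$ satisfies $\widehat{\mathscr I}\big[(1-\hat t)^{\lfloor k/2\rfloor}(1+\hat t)^{|\lfloor (k-1)/2\rfloor|}\hat\psi\,\hat\varphi\big]=0$ for all $\hat\varphi\in P_{r-\max\{1,k\}}([-1,1])$, then $\hat\psi\equiv0$. *)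

(* Defs.v *)
From HB Require Import structures.
From mathcomp Require Import all_boot all_order all_algebra.
From mathcomp Require Import reals.
Set Implicit Arguments. Unset Strict Implicit. Unset Printing Implicit Defensive.
Import Order.TTheory GRing.Theory Num.Theory.
Local Open Scope ring_scope.

(* positive part of an integer, as a nat: used so that a sum
   \sum_{i=0}^{m-1} with m <= 0 is empty *)
Definition pos_part (m : int) : nat :=
  match m with Posz n => n | Negz _ => 0%N end.

(* floor((k-1)/2) and floor(k/2) for k : nat, as integers (intdiv's %/ is
   floor division for positive divisors) *)
Definition flm1 (k : nat) : int := ((k%:Z - 1) %/ 2)%Z.
Definition fl0 (k : nat) : int := (k%:Z %/ 2)%Z.

Section Defs.
Variable R : realType.

(* p \in P_s([-1,1]) : degree at most s (s may be negative: then p = 0) *)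
Definition inP (s : int) (p : {poly R}) : Prop := (size p)%:Z <= s + 1.

Definition enorm (d : nat) (v : 'I_d -> R) : R := Num.sqrt (\sum_(j < d) v j ^+ 2).

Definition A1 (I : {poly R} -> R) (r k : nat) : Prop :=
  let s := r%:Z - (Num.max 1 k%:Z) in
  let w := ((1 - 'X) ^+ pos_part (fl0 k)) * ((1 + 'X) ^+ `|flm1 k|%N) in
  forall psi : {poly R}, inP s psi ->
    (forall phi : {poly R}, inP s phi -> I (w * psi * phi) = 0) ->
    psi = 0.

(* R^d-valued polynomials are represented componentwise: 'I_d -> {poly R} *)
Definition Nmap (I : {poly R} -> R) (d r k : nat) (psi : 'I_d -> {poly R}) : R :=
  \sum_(i < pos_part (flm1 k)) enorm (fun j => (psi j)^`(i).[-1])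
  + \sum_(i < pos_part (fl0 k)) enorm (fun j => (psi j)^`(i).[1])
  + \sum_((k == 0)%N <= i < (r - k).+1)
       enorm (fun j => I (psi j * (1 + 'X) ^+ i)).

Definition is_norm_on (d : nat) (P : ('I_d -> {poly R}) -> Prop)
  (N : ('I_d -> {poly R}) -> R) : Prop :=
  [/\ (forall p, P p -> 0 <= N p),
      (forall p, P p -> N p = 0 -> forall j, p j = 0),
      (forall (a : R) p, P p -> N (fun j => a *: p j) = `|a| * N p) &
      (forall p q, P p -> P q -> N (fun j => p j + q j) <= N p + N q)].
End Defs.

(* Main.v *)
Require Import Defs.
From HB Require Import structures.
From mathcomp Require Import all_boot all_order all_algebra.
From mathcomp Require Import reals.
From mathcomp Require Import zify ring lra.
Import Order.TTheory GRing.Theory Num.Theory.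
Local Open Scope ring_scope.

Lemma flm10 : flm1 0 = -1. Proof. by []. Qed.
Lemma flk k : (0 < k)%N -> flm1 k = ((k.-1) %/ 2)%N.
Proof. move=> k0; rewrite /flm1.
have -> : (k%:Z - 1 = (k.-1)%:Z)%R by rewrite -[in LHS](prednK k0) -addn1 PoszD addrK.
by rewrite divz_nat. Qed.
Lemma fl0k k : fl0 k = (k %/ 2)%N.
Proof. by rewrite /fl0 divz_nat. Qed.
Lemma t k : (0 < k)%N -> ((k.-1) %/ 2 + k %/ 2 = k.-1)%N.
Proof. move=> k0. lia. Qed.

Section Aux.
Variable R : realType.

Lemma derivn_XsubCM (c : R) (q : {poly R}) n :
  (('X - c%:P) * q)^`(n.+1) = ('X - c%:P) * q^`(n.+1) + q^`(n) *+ n.+1.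
Proof.
elim: n => [|n IH].
  by rewrite derivn1 derivM derivXsubC mul1r derivn0 derivn1 addrC.
rewrite derivnS IH derivD derivM derivXsubC mul1r derivMn -!derivnS.
by rewrite [in RHS]mulrS addrA [q^`(n.+1) + _]addrC -addrA.
Qed.

Lemma vanish_dvd (c : R) m (p : {poly R}) :
  (forall i, (i < m)%N -> p^`(i).[c] = 0) -> ('X - c%:P) ^+ m %| p.
Proof.
elim: m p => [|m IH] p H; first by rewrite expr0 dvd1p.
have : root p c by rewrite /root -[p]derivn0 H.
move/factor_theorem => [q Hp]; rewrite Hp in H *.
rewrite exprSr dvdp_mul //; apply: IH => i lti.
have := H i.+1 lti; rewrite mulrC derivn_XsubCM hornerD hornerM hornerXsubC subrr mul0r add0r.
by rewrite hornerMn => /eqP; rewrite mulrn_eq0 /= => /eqP.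
Qed.

Lemma onePX : (1 + 'X : {poly R}) = 'X - (-1)%:P.
Proof. by rewrite polyCN opprK addrC. Qed.

Lemma span_lemma (L : {poly R} -> R)
  (Llin : forall (a : R) p q, L (a *: p + q) = a * L p + L q) n :
  (forall i, (i < n)%N -> L ((1 + 'X) ^+ i) = 0) ->
  forall phi : {poly R}, (size phi <= n)%N -> L phi = 0.
Proof.
have L0 : L 0 = 0.
  have := Llin 1 0 0; rewrite scaler0 addr0 mul1r => /eqP.
  by rewrite -subr_eq0 opprD addrA subrr sub0r oppr_eq0 => /eqP.
elim: n => [|n IH] H phi.
  by rewrite leqn0 size_poly_eq0 => /eqP ->.
move=> sz.
have -> : phi = phi`_n *: (1 + 'X) ^+ n + (phi - phi`_n *: (1 + 'X) ^+ n) by rewrite addrC subrK.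
rewrite Llin H // mulr0 add0r; apply: IH => [i lti|]; first by apply: H; apply: ltnW.
have mon : (1 + 'X : {poly R}) ^+ n \is monic by apply: monic_exp; rewrite addrC -[1]/(1%:P) monicXaddC.
have szm : size ((1 + 'X : {poly R}) ^+ n) = n.+1.
  by rewrite onePX size_exp_XsubC.
apply/leq_sizeP => j lej; rewrite coefB coefZ.
case: (ltngtP j n) => [|ltnj|->]; first by rewrite ltnNge lej.
  rewrite [phi`_j]nth_default ?[((1 + 'X)^+n)`_j]nth_default ?szm ?mulr0 ?subrr //; exact: leq_trans sz ltnj.
by have := monicP mon; rewrite /lead_coef szm /= => ->; rewrite mulr1 subrr.
Qed.


Lemma I0 (I : {poly R} -> R)
  (Ilin : forall (a : R) (p q : {poly R}), I (a *: p + q) = a * I p + I q) : I 0 = 0.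
Proof.
have := Ilin 1 0 0; rewrite scaler0 addr0 mul1r => /eqP.
by rewrite -subr_eq0 opprD addrA subrr sub0r oppr_eq0 => /eqP.
Qed.

Lemma IZ (I : {poly R} -> R)
  (Ilin : forall (a : R) (p q : {poly R}), I (a *: p + q) = a * I p + I q) a p :
  I (a *: p) = a * I p.
Proof. by rewrite -[a *: p]addr0 Ilin I0 // addr0. Qed.

Lemma Llin_of (I : {poly R} -> R)
  (Ilin : forall (a : R) (p q : {poly R}), I (a *: p + q) = a * I p + I q) (u : {poly R}) :
  forall (a : R) p q, I (u * (a *: p + q)) = a * I (u * p) + I (u * q).
Proof. by move=> a p q; rewrite mulrDr -scalerAr Ilin. Qed.

Lemma core (I : {poly R} -> R)
  (Ilin : forall (a : R) (p q : {poly R}), I (a *: p + q) = a * I p + I q)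
  r k (Hk : (k <= r)%N) (HA1 : A1 I r k) (p : {poly R}) :
  (size p <= r)%N ->
  (forall i, (i < pos_part (flm1 k))%N -> p^`(i).[-1] = 0) ->
  (forall i, (i < pos_part (fl0 k))%N -> p^`(i).[1] = 0) ->
  (forall i, ((k == 0)%N <= i < (r - k).+1)%N -> I (p * (1 + 'X) ^+ i) = 0) ->
  p = 0.
Proof.
move=> szp Hm Hp HI.
case: (posnP k) => [k0|k0].
  subst k; apply: HA1; first by rewrite /inP; lia.
  move=> phi; rewrite /inP => szphi.
  have -> : pos_part (fl0 0) = 0%N by [].
  have -> : `|flm1 0|%N = 1%N by [].
  apply: (@span_lemma (fun phi => I ((1 - 'X) ^+ 0 * (1 + 'X) ^+ 1 * p * phi)) _ r).
  - by move=> a p1 q1; rewrite Llin_of.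
  - move=> i ltir; have -> : (1 - 'X) ^+ 0 * (1 + 'X) ^+ 1 * p * (1 + 'X) ^+ i = p * (1 + 'X) ^+ i.+1
      by rewrite expr0 mul1r expr1 exprS; ring.
    by apply: HI; rewrite /= ltnS subn0.
  - lia.
pose A := ((k.-1) %/ 2)%N; pose B := (k %/ 2)%N.
have eA : pos_part (flm1 k) = A by rewrite flk.
have eA' : `|flm1 k|%N = A by rewrite flk.
have eB : pos_part (fl0 k) = B by rewrite fl0k.
have AB : (A + B = k.-1)%N by rewrite /A /B; lia.
rewrite eA in Hm; rewrite eB in Hp.
have d1 : ('X - (-1)%:P) ^+ A %| p by apply: vanish_dvd.
have d2 : ('X - 1%:P) ^+ B %| p by apply: vanish_dvd.
have cop : coprimep (('X - (-1)%:P) ^+ A) (('X - (1 : R)%:P) ^+ B).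
  apply/coprimep_expl/coprimep_expr/coprimep_XsubC2.
  by rewrite opprK; apply/negP => /eqP; lra.
have : ('X - (-1)%:P) ^+ A * ('X - 1%:P) ^+ B %| p by rewrite Gauss_dvdp //; apply/andP; split.
case/dvdpP => q Hpq.
suff q0 : q = 0 by rewrite Hpq q0 mul0r.
have nzA : ('X - (-1 : R)%:P) ^+ A != 0 by rewrite -size_poly_eq0 size_exp_XsubC.
have nzB : ('X - (1 : R)%:P) ^+ B != 0 by rewrite -size_poly_eq0 size_exp_XsubC.
have szq : (size q + k.-1 <= r)%N.
  have [->|nzq] := eqVneq q 0; first by rewrite size_poly0; lia.
  move: szp; rewrite Hpq size_mul ?mulf_neq0 // size_mul // !size_exp_XsubC.
  have : (0 < size q)%N by rewrite size_poly_gt0.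
  rewrite -AB -!subn1; set s := size q; lia.
apply: HA1; first by rewrite /inP; move: szq k0 Hk; set s := size q; lia.
move=> phi; rewrite /inP => szphi.
rewrite eB eA'.
apply: (@span_lemma (fun phi => I ((1 - 'X) ^+ B * (1 + 'X) ^+ A * q * phi)) _ (r - k).+1).
- by move=> a p1 q1; rewrite Llin_of.
- move=> i ltir.
  have -> : (1 - 'X) ^+ B * (1 + 'X) ^+ A * q * (1 + 'X) ^+ i
      = (-1) ^+ B *: (p * (1 + 'X) ^+ i).
    have e : ((-1 : R) ^+ B)%:P = (-1) ^+ B by rewrite polyC_exp polyCN.
    rewrite Hpq onePX -mul_polyC e.
    have -> : (1 - 'X : {poly R}) = - ('X - 1%:P) by rewrite polyC1 opprB.
    rewrite [(- ('X - _)) ^+ B]exprNn. ring.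
  by rewrite IZ // HI ?mulr0 //; apply/andP; split; [rewrite eqn0Ngt k0|].
- lia.
Qed.

End Aux.


Section En.
Variable R : realType.
Variable d : nat.
Implicit Types u v : 'I_d -> R.

Lemma enorm_ge0 u : 0 <= enorm u.
Proof. exact: sqrtr_ge0. Qed.

Lemma enorm_ext u v : (forall j, u j = v j) -> enorm u = enorm v.
Proof. by move=> H; rewrite /enorm; congr Num.sqrt; apply: eq_bigr => j _; rewrite H. Qed.

Lemma enorm_eq0 u : enorm u = 0 -> forall j, u j = 0.
Proof.
move=> /eqP; rewrite sqrtr_eq0 => H j.
have S0 : \sum_(j < d) u j ^+ 2 = 0.
  by apply/eqP; rewrite eq_le H sumr_ge0 // => i _; rewrite sqr_ge0.
have := @psumr_eq0P _ _ predT (fun i => u i ^+ 2) (fun i _ => sqr_ge0 (u i)) S0 j isT.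
by move/eqP; rewrite sqrf_eq0 => /eqP.
Qed.

Lemma enormZ (a : R) u : enorm (fun j => a * u j) = `|a| * enorm u.
Proof.
rewrite /enorm.
have -> : \sum_(j < d) (a * u j) ^+ 2 = a ^+ 2 * \sum_(j < d) u j ^+ 2.
  by rewrite mulr_sumr; apply: eq_bigr => j _; rewrite exprMn.
by rewrite sqrtrM ?sqr_ge0 // sqrtr_sqr.
Qed.

Lemma CS u v : (\sum_(j < d) u j * v j) ^+ 2
   <= (\sum_(j < d) u j ^+ 2) * (\sum_(j < d) v j ^+ 2).
Proof.
set A := \sum_(j < d) u j ^+ 2; set B := \sum_(j < d) v j ^+ 2.
set C := \sum_(j < d) u j * v j.
have E : \sum_(i < d) \sum_(j < d) (u i * v j - u j * v i) ^+ 2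
   = (\sum_(i < d) \sum_(j < d) (u i ^+ 2 * v j ^+ 2) + \sum_(i < d) \sum_(j < d) (u j ^+ 2 * v i ^+ 2))
     - 2 * \sum_(i < d) \sum_(j < d) ((u i * v i) * (u j * v j)).
  rewrite [in RHS]mulr_sumr -big_split -sumrB; apply: eq_bigr => i _.
  rewrite [in RHS]mulr_sumr -big_split -sumrB; apply: eq_bigr => j _ /=; ring.
have E1 : \sum_(i < d) \sum_(j < d) (u i ^+ 2 * v j ^+ 2) = A * B.
  by rewrite /A mulr_suml; apply: eq_bigr => i _; rewrite mulr_sumr.
have E2 : \sum_(i < d) \sum_(j < d) (u j ^+ 2 * v i ^+ 2) = A * B.
  rewrite mulrC /B mulr_suml; apply: eq_bigr => i _; rewrite mulr_sumr.
  by apply: eq_bigr => j _; rewrite mulrC.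
have E3 : \sum_(i < d) \sum_(j < d) ((u i * v i) * (u j * v j)) = C ^+ 2.
  by rewrite expr2 /C mulr_suml; apply: eq_bigr => i _; rewrite mulr_sumr.
have : 0 <= \sum_(i < d) \sum_(j < d) (u i * v j - u j * v i) ^+ 2.
  by apply: sumr_ge0 => i _; apply: sumr_ge0 => j _; rewrite sqr_ge0.
rewrite E E1 E2 E3; lra.
Qed.

Lemma enormD u v : enorm (fun j => u j + v j) <= enorm u + enorm v.
Proof.
have hu := enorm_ge0 u; have hv := enorm_ge0 v.
have hw := enorm_ge0 (fun j => u j + v j).
set C := \sum_(j < d) u j * v j.
have C1 : C <= enorm u * enorm v.
  rewrite /enorm -sqrtrM; last by apply: sumr_ge0 => i _; rewrite sqr_ge0.
  apply: (le_trans (ler_norm C)); rewrite -sqrtr_sqr ler_sqrt ?CS //.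
  by apply: mulr_ge0; apply: sumr_ge0 => i _; rewrite sqr_ge0.
have Ew : enorm (fun j => u j + v j) ^+ 2 = enorm u ^+ 2 + enorm v ^+ 2 + 2 * C.
  rewrite /enorm !sqr_sqrtr; try by apply: sumr_ge0 => i _; rewrite sqr_ge0.
  rewrite /C mulr_sumr -!big_split; apply: eq_bigr => j _ /=; ring.
nra.
Qed.
End En.

Lemma sum3_eq0 (R : realType) (x y z : R) : x + y + z = 0 -> 0 <= x -> 0 <= y -> 0 <= z ->
  [/\ x = 0, y = 0 & z = 0].
Proof. move=> *; split; lra. Qed.

Theorem mainTheorem2 (R : realType) (d r k : nat) (I : {poly R} -> R)
  (I_linear : forall (a : R) (p q : {poly R}), I (a *: p + q) = a * I p + I q)
  (Hk : (k <= r)%N) (HA1 : A1 I r k) :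
  is_norm_on (fun psi : 'I_d -> {poly R} => forall j, inP (r%:Z - 1) (psi j))
             (@Nmap R I d r k).
Proof.
have Iadd : forall p q, I (p + q) = I p + I q.
  by move=> p q; have := I_linear 1 p q; rewrite scale1r mul1r.
split.
- move=> p _; rewrite /Nmap; apply: addr_ge0; first apply: addr_ge0.
  + by apply: sumr_ge0 => i _; apply: enorm_ge0.
  + by apply: sumr_ge0 => i _; apply: enorm_ge0.
  + by apply: sumr_ge0 => i _; apply: enorm_ge0.
- move=> p Pp N0 j.
  rewrite /Nmap in N0.
  have [S1 S2 S3] := @sum3_eq0 _ _ _ _ N0
    (sumr_ge0 _ (fun i _ => @enorm_ge0 _ _ _)) (sumr_ge0 _ (fun i _ => @enorm_ge0 _ _ _))
    (sumr_ge0 _ (fun i _ => @enorm_ge0 _ _ _)).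
  apply: (@core R I I_linear r k Hk HA1).
  + by move: (Pp j); rewrite /inP; set s := size (p j); lia.
  + move=> i lti.
    have := @psumr_eq0P _ _ predT _ (fun i _ => @enorm_ge0 _ _ _) S1 (Ordinal lti) isT.
    by move/enorm_eq0/(_ j).
  + move=> i lti.
    have := @psumr_eq0P _ _ predT _ (fun i _ => @enorm_ge0 _ _ _) S2 (Ordinal lti) isT.
    by move/enorm_eq0/(_ j).
  + move=> i Hi.
    move/eqP: S3; rewrite psumr_eq0; last by move=> l _; apply: enorm_ge0.
    move/allP/(_ i); rewrite mem_index_iota Hi => /(_ isT) /eqP /enorm_eq0.
    by move/(_ j).
- move=> a p _; rewrite /Nmap !mulrDr !mulr_sumr.
  congr (_ + _ + _); apply: eq_bigr => i _; rewrite -enormZ; apply: enorm_ext => j.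
  + by rewrite derivnZ hornerZ.
  + by rewrite derivnZ hornerZ.
  + by rewrite -scalerAl -[_ *: _]addr0 I_linear I0 // addr0.
- move=> p q _ _; rewrite /Nmap.
  have -> : forall x y z x' y' z' : R, x + y + z + (x' + y' + z') = (x + x') + (y + y') + (z + z').
    by move=> *; ring.
  rewrite -!big_split; apply: lerD; first apply: lerD.
  + apply: ler_sum => i _.
    by apply: le_trans (enormD _ _ _ _); rewrite le_eqVlt; apply/orP; left; apply/eqP; apply: enorm_ext => j /=; rewrite derivnD hornerD.
  + apply: ler_sum => i _.
    by apply: le_trans (enormD _ _ _ _); rewrite le_eqVlt; apply/orP; left; apply/eqP; apply: enorm_ext => j /=; rewrite derivnD hornerD.
  + apply: ler_sum => i _.
    by apply: le_trans (enormD _ _ _ _); rewrite le_eqVlt; apply/orP; left; apply/eqP; apply: enorm_ext => j /=; rewrite mulrDl Iadd.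
Qed.
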